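(* In the UDoG template described in the context, let $c>0$ and $t\ge0$. If $\eta_{x,t}\le\frac{\bar r_t}{c\,\alpha_t\|m_t\|}$, $\eta_{y,t}\le\frac{\bar r_t}{c\,\alpha_t\|g_t-m_t\|}$ and $\eta_{y,t}\le\eta_{x,t}$, then \[ \|x_{t+1}-y_t\|\le\frac{\bar r_t}{c},\quad\|y_{t+1}-y_t\|\le\frac{2\bar r_t}{c},\quad\|x_{t+1}-y_{t+1}\|\le\frac{2\bar r_t}{c},\quad\bar r_{t+1}\le\bar r_t\left(1+\frac2c\right). \]
   Context: Norms are Euclidean, $\Pi_{\mathcal K}$ is Euclidean projection onto a closed convex set $\mathcal K\subseteq\mathbb R^n$; $\mathcal O$ is a stochastic gradient oracle for a function on $\mathcal K$. UDoG template: given $x_0\in\mathcal K$, $r_\epsilon>0$, set $y_0=x_0$; for $t=0,1,\dots$: $\bar r_t=\max_{k\le t}\max\{\|y_k-x_0\|,\|x_k-x_0\|,r_\epsilon\}$, $\alpha_t=\sum_{k=0}^t\bar r_k/\bar r_t$, $w_t=\alpha_t\bar r_t$; $\bar z_t=\frac{w_ty_t+\sum_{k=0}^{t-1}w_kx_{k+1}}{\sum_{k=0}^tw_k}$, $m_t\sim\mathcal O(\bar z_t)$, $x_{t+1}=\Pi_{\mathcal K}(y_t-\alpha_t\eta_{x,t}m_t)$; $\bar x_t=\frac{\sum_{k=0}^tw_kx_{k+1}}{\sum_{k=0}^tw_k}$, $g_t\sim\mathcal O(\bar x_t)$, $y_{t+1}=\Pi_{\mathcal K}(y_t-\alpha_t\eta_{y,t}g_t)$,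 with positive step sizes $\eta_{x,t},\eta_{y,t}$. *)

(* Defs.v *)
From HB Require Import structures.
From mathcomp Require Import all_boot all_order all_algebra.
From mathcomp Require Import all_classical all_reals all_analysis.
Set Implicit Arguments. Unset Strict Implicit. Unset Printing Implicit Defensive.
Import Order.TTheory GRing.Theory Num.Theory.
Import numFieldNormedType.Exports.
Local Open Scope ring_scope.
Local Open Scope classical_set_scope.

Section UDoG.
Variables (R : realType) (n : nat).
Notation vec := 'rV[R]_n.

Definition enorm (v : vec) : R := Num.sqrt (\sum_(i < n) (v ord0 i) ^+ 2).

Definition convex_set (K : set vec) : Prop :=
  forall u v : vec, K u -> K v -> forall l : R, 0 <= l -> l <= 1 ->
    K (l *: u + (1 - l) *: v).

Definition is_euclid_proj (K : set vec) (proj : vec -> vec) : Prop :=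
  forall v : vec, K (proj v) /\ forall q : vec, K q -> enorm (v - proj v) <= enorm (v - q).

Definition rbar (x0 : vec) (reps : R) (x y : nat -> vec) (t : nat) : R :=
  \big[Num.max/0]_(k < t.+1)
     Num.max (Num.max (enorm (y k - x0)) (enorm (x k - x0))) reps.

Definition alpha (x0 : vec) (reps : R) (x y : nat -> vec) (t : nat) : R :=
  (\sum_(k < t.+1) rbar x0 reps x y k) / rbar x0 reps x y t.

Definition weight (x0 : vec) (reps : R) (x y : nat -> vec) (t : nat) : R :=
  alpha x0 reps x y t * rbar x0 reps x y t.

Definition zbar (x0 : vec) (reps : R) (x y : nat -> vec) (t : nat) : vec :=
  (\sum_(k < t.+1) weight x0 reps x y k)^-1 *:
  (weight x0 reps x y t *: y t
     + \sum_(k < t) weight x0 reps x y k *: x k.+1).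

Definition xbar (x0 : vec) (reps : R) (x y : nat -> vec) (t : nat) : vec :=
  (\sum_(k < t.+1) weight x0 reps x y k)^-1 *:
  (\sum_(k < t.+1) weight x0 reps x y k *: x k.+1).

(* A run of the UDoG template: the oracle O is modelled by the relation
   O p s = "s is a possible output of the stochastic gradient oracle queried at p";
   m t, g t are the realized oracle outputs. *)
Definition udog_run (K : set vec) (proj : vec -> vec) (O : vec -> vec -> Prop)
  (x0 : vec) (reps : R) (etax etay : nat -> R)
  (x y m g : nat -> vec) : Prop :=
  x 0 = x0 /\ y 0 = x0 /\
  (forall t, O (zbar x0 reps x y t) (m t)) /\
  (forall t, x t.+1 = proj (y t - (alpha x0 reps x y t * etax t) *: m t)) /\
  (forall t, O (xbar x0 reps x y t) (g t)) /\
  (forall t, y t.+1 = proj (y t - (alpha x0 reps x y t * etay t) *: g t)).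

End UDoG.

(* Main.v *)
Require Import Defs.
From HB Require Import structures.
From mathcomp Require Import all_boot all_order all_algebra.
From mathcomp Require Import all_classical all_reals all_analysis.
From mathcomp Require Import ring lra.
Import Order.TTheory GRing.Theory Num.Theory.
Import numFieldNormedType.Exports.
Local Open Scope ring_scope.
Local Open Scope classical_set_scope.
Set Implicit Arguments. Unset Strict Implicit.

Section Aux.
Variables (R : realType) (n : nat).
Notation vec := 'rV[R]_n.
Implicit Types (u v w q y : vec).

Definition dot (u v : vec) : R := \sum_(i < n) u ord0 i * v ord0 i.

Lemma dotC u v : dot u v = dot v u.
Proof. by apply: eq_bigr => i _; rewrite mulrC. Qed.

Lemma dotDl u v w : dot (u + v) w = dot u w + dot v w.
Proof. rewrite /dot -big_split; apply: eq_bigr => i _; by rewrite !mxE mulrDl. Qed.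

Lemma dotNl u w : dot (- u) w = - dot u w.
Proof. rewrite /dot -sumrN; apply: eq_bigr => i _; by rewrite !mxE mulNr. Qed.

Lemma dotZl (a : R) u w : dot (a *: u) w = a * dot u w.
Proof. rewrite /dot mulr_sumr; apply: eq_bigr => i _; by rewrite !mxE mulrA. Qed.

Lemma dotBl u v w : dot (u - v) w = dot u w - dot v w.
Proof. by rewrite dotDl dotNl. Qed.

Lemma dotDr u v w : dot w (u + v) = dot w u + dot w v.
Proof. by rewrite dotC dotDl !(dotC w). Qed.
Lemma dotBr u v w : dot w (u - v) = dot w u - dot w v.
Proof. by rewrite dotC dotBl !(dotC w). Qed.
Lemma dotZr (a : R) u w : dot w (a *: u) = a * dot w u.
Proof. by rewrite dotC dotZl dotC. Qed.

Lemma dot_ge0 u : 0 <= dot u u.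
Proof. by apply: sumr_ge0 => i _; rewrite -expr2 sqr_ge0. Qed.

Lemma enormE u : enorm u = Num.sqrt (dot u u).
Proof. by rewrite /enorm /dot; congr Num.sqrt; apply: eq_bigr => i _; rewrite expr2. Qed.

Lemma enorm_ge0 u : 0 <= enorm u.
Proof. exact: sqrtr_ge0. Qed.

Lemma enorm_sqr u : enorm u ^+ 2 = dot u u.
Proof. by rewrite enormE sqr_sqrtr // dot_ge0. Qed.

Lemma dot0_eq u : dot u u = 0 -> forall w, dot u w = 0.
Proof.
move=> h w.
have hz : forall i, u ord0 i * u ord0 i = 0.
  move=> i; move/eqP: h; rewrite /dot psumr_eq0 => [/allP H|j _].
    by apply/eqP; apply: H; rewrite mem_index_enum.
  by rewrite -expr2 sqr_ge0.
rewrite /dot big1 // => i _.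
have : u ord0 i * u ord0 i == 0 by rewrite hz.
by rewrite mulf_eq0 orbb => /eqP ->; rewrite mul0r.
Qed.

Lemma cauchy_schwarz u v : dot u v <= enorm u * enorm v.
Proof.
have Q : forall s : R, 0 <= s ^+ 2 * dot u u - 2 * s * dot u v + dot v v.
  move=> s; have := dot_ge0 (s *: u - v).
  rewrite !(dotBl, dotBr, dotZl, dotZr) (dotC v u) => h; nra.
rewrite !enormE.
have A0 := dot_ge0 u; have B0 := dot_ge0 v.
case: (ltrgt0P (dot u u)) => HA.
- have := Q (dot u v / dot u u) => HQ.
  have h2 : dot u v ^+ 2 <= dot u u * dot v v.
    have e : (dot u v / dot u u) ^+ 2 * dot u u - 2 * (dot u v / dot u u) * dot u v + dot v v
      = (dot u u * dot v v - dot u v ^+ 2) / dot u u by field; rewrite gt_eqF.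
    rewrite e in HQ; rewrite -subr_ge0; move: HQ; rewrite pmulr_lge0 //.
    by rewrite invr_gt0.
  rewrite -sqrtrM //; apply: le_trans (ler_norm (dot u v)) _.
  by rewrite -sqrtr_sqr ler_sqrt // mulr_ge0.
- by move: A0; rewrite leNgt HA.
- by rewrite (@dot0_eq u HA v) mulr_ge0 // sqrtr_ge0.
Qed.

Lemma enormD u v : enorm (u + v) <= enorm u + enorm v.
Proof.
rewrite -(ler_sqr (x:=enorm (u+v))) ?nnegrE ?addr_ge0 ?enorm_ge0 //.
rewrite enorm_sqr !(dotDl, dotDr) (dotC v u) sqrrD !enorm_sqr.
have := cauchy_schwarz u v; lra.
Qed.

Lemma enormZ (a : R) u : enorm (a *: u) = `|a| * enorm u.
Proof.
rewrite !enormE !(dotZl, dotZr) mulrA -expr2 sqrtrM ?sqrtr_sqr //.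
exact: sqr_ge0.
Qed.

Lemma enormN u : enorm (- u) = enorm u.
Proof. by rewrite -scaleN1r enormZ normrN normr1 mul1r. Qed.

Lemma enormB u v : enorm (u - v) <= enorm u + enorm v.
Proof. by rewrite -(enormN v); exact: enormD. Qed.

Lemma enormBC u v : enorm (u - v) = enorm (v - u).
Proof. by rewrite -enormN opprB. Qed.

Lemma le_from_dot w (a : vec) : enorm w ^+ 2 <= dot a w -> enorm w <= enorm a.
Proof.
move=> h; have := cauchy_schwarz a w.
have w0 := enorm_ge0 w; have a0 := enorm_ge0 a.
move=> h2; have h3 : enorm w * enorm w <= enorm w * enorm a.
  rewrite -expr2 mulrC; exact: le_trans h h2.
case: (ltrgt0P (enorm w)) => Hw; last by rewrite Hw.
- by rewrite -(ler_pM2l Hw).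
- by move: w0; rewrite leNgt Hw.
Qed.

Lemma conv_mem (K : set vec) : convex_set K -> forall u v (l : R),
  K u -> K v -> 0 <= l -> l <= 1 -> K (l *: u + (1 - l) *: v).
Proof.
move=> Kc u v l Ku Kv l0 l1.
have := Kc u v (Itv01 l0 l1) (mem_set Ku) (mem_set Kv).
by move/set_mem.
Qed.

Variables (K : set vec) (proj : vec -> vec).
Hypotheses (Kc : convex_set K) (Hp : is_euclid_proj K proj).

Lemma proj_var v q : K q -> dot (v - proj v) (q - proj v) <= 0.
Proof.
move=> Kq; set p := proj v; set C := dot (v - p) (q - p); set W := dot (q - p) (q - p).
have W0 : 0 <= W by exact: dot_ge0.
have key : forall l : R, 0 <= l -> l <= 1 -> 2 * l * C <= l ^+ 2 * W.
  move=> l l0 l1.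
  have Kl := @conv_mem K Kc q p l Kq (proj1 (Hp v)) l0 l1.
  have := proj2 (Hp v) _ Kl.
  have e : v - (l *: q + (1 - l) *: p) = (v - p) - l *: (q - p).
    by apply/rowP => i; rewrite !mxE; ring.
  rewrite e -ler_sqr ?nnegrE ?enorm_ge0 // !enorm_sqr.
  rewrite /C /W; set d := v - p; set w := q - p.
  rewrite !(dotBl, dotBr, dotZl, dotZr) (dotC q v) (dotC p v) (dotC p q).
  move=> h; lra.
rewrite leNgt; apply/negP => HC.
have l0 : 0 < C / (W + C) by rewrite divr_gt0 // ltr_wpDl.
have l1 : C / (W + C) <= 1 by rewrite ler_pdivrMr ?ltr_wpDl // mul1r lerDr.
have := key _ (ltW l0) l1.
have WC : 0 < W + C by rewrite ltr_wpDl.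
set l := C / (W + C).
move=> h.
have h' : 2 * C <= l * W.
  rewrite -(ler_pM2l l0); move: h; rewrite expr2 -/l => hh; nra.
have : l * W <= C by rewrite /l mulrAC ler_pdivrMr // ler_pM2l // lerDl (ltW HC).
move=> h2; lra.
Qed.

Lemma proj_to_K u y : K y -> enorm (proj u - y) <= enorm (u - y).
Proof.
move=> Ky; apply: le_from_dot; rewrite enorm_sqr.
have := @proj_var u y Ky.
rewrite !(dotBl, dotBr) ?(dotC (proj u) u) ?(dotC y u) ?(dotC y (proj u)).
lra.
Qed.

Lemma proj_nonexp u v : enorm (proj u - proj v) <= enorm (u - v).
Proof.
apply: le_from_dot; rewrite enorm_sqr.
have h1 := @proj_var u _ (proj1 (Hp v)).
have h2 := @proj_var v _ (proj1 (Hp u)).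
move: h1 h2.
rewrite !(dotBl, dotBr).
rewrite ?(dotC (proj u) u) ?(dotC (proj v) u) ?(dotC (proj v) v) ?(dotC (proj u) v) ?(dotC (proj v) (proj u)) ?(dotC v u).
lra.
Qed.

End Aux.
Lemma le_bigmax_mem (R : realType) (I : eqType) (r : seq I) (f : I -> R) x0 i0 :
  i0 \in r -> f i0 <= \big[Num.max/x0]_(i <- r) f i.
Proof.
elim: r => //= j r IH; rewrite inE big_cons => /orP [/eqP -> | h].
  by rewrite le_max lexx.
by rewrite le_max IH // orbT.
Qed.

Theorem lemma19 (R : realType) (n : nat) (K : set 'rV[R]_n)
  (proj : 'rV[R]_n -> 'rV[R]_n) (O : 'rV[R]_n -> 'rV[R]_n -> Prop)
  (x0 : 'rV[R]_n) (reps : R) (etax etay : nat -> R)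
  (x y m g : nat -> 'rV[R]_n) (c : R) (t : nat) :
  closed K -> convex_set K -> K x0 -> is_euclid_proj K proj ->
  0 < reps ->
  (forall k, 0 < etax k) -> (forall k, 0 < etay k) ->
  udog_run K proj O x0 reps etax etay x y m g ->
  0 < c ->
  etax t * (c * alpha x0 reps x y t * enorm (m t)) <= rbar x0 reps x y t ->
  etay t * (c * alpha x0 reps x y t * enorm (g t - m t)) <= rbar x0 reps x y t ->
  etay t <= etax t ->
  [/\ enorm (x t.+1 - y t) <= rbar x0 reps x y t / c,
      enorm (y t.+1 - y t) <= 2 * rbar x0 reps x y t / c,
      enorm (x t.+1 - y t.+1) <= 2 * rbar x0 reps x y t / c
    & rbar x0 reps x y t.+1 <= rbar x0 reps x y t * (1 + 2 / c)].
Proof.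
move=> _ Kc Kx0 Hp reps0 ex0 ey0 [hx0 [hy0 [_ [hx [_ hy]]]]] c0 H1 H2 H3.
have term_le : forall t' k, (k <= t')%N ->
    Num.max (Num.max (enorm (y k - x0)) (enorm (x k - x0))) reps <= rbar x0 reps x y t'.
  move=> t' k hk.
  exact: (@le_bigmax_mem R _ (index_enum 'I_t'.+1)
    (fun i : 'I_t'.+1 => Num.max (Num.max (enorm (y i - x0)) (enorm (x i - x0))) reps)
    0 (Ordinal (hk : (k < t'.+1)%N)) (mem_index_enum _)).
have rbar_ge : forall k, Num.max (Num.max (enorm (y k - x0)) (enorm (x k - x0))) reps
    <= rbar x0 reps x y k.
  by move=> k; apply: term_le.
have rpos : forall k, 0 < rbar x0 reps x y k.
  move=> k; apply: (lt_le_trans reps0); apply: le_trans (rbar_ge k).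
  by rewrite le_max lexx orbT.
have a0 : 0 <= alpha x0 reps x y t.
  by rewrite /alpha divr_ge0 ?(ltW (rpos t)) // sumr_ge0 // => i _; exact: ltW.
have Ky : K (y t).
  case: t {H1 H2 H3 a0} => [|k]; first by rewrite hy0.
  by rewrite hy; exact: (proj1 (Hp _)).
have hyt := rbar_ge t.
rewrite !ge_max in hyt; case/andP: hyt => /andP [Hyt Hxt] Hrt.
set r := rbar x0 reps x y t in H1 H2 Hyt Hxt Hrt *.
set a := alpha x0 reps x y t in H1 H2 a0 *.
have r0 : 0 < r := rpos t.
set M := enorm (m t); set G := enorm (g t - m t).
have M0 : 0 <= M := enorm_ge0 _.
have G0 : 0 <= G := enorm_ge0 _.
have ex0t := ex0 t; have ey0t := ey0 t.
have A1 : a * etax t * M <= r / c.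
  rewrite ler_pdivlMr //; apply: le_trans H1; rewrite le_eqVlt; apply/orP; left; apply/eqP; rewrite /M; ring.
have A2 : a * etay t * G <= r / c.
  rewrite ler_pdivlMr //; apply: le_trans H2; rewrite le_eqVlt; apply/orP; left; apply/eqP; rewrite /G; ring.
have A3 : a * etay t * M <= a * etax t * M.
  by rewrite ler_wpM2r // ler_wpM2l.
have aex0 : 0 <= a * etax t by rewrite mulr_ge0 // ltW.
have aey0 : 0 <= a * etay t by rewrite mulr_ge0 // ltW.
have aexy : 0 <= a * (etax t - etay t) by rewrite mulr_ge0 // subr_ge0.
have S1 : enorm (x t.+1 - y t) <= a * etax t * M.
  rewrite hx; apply: le_trans (proj_to_K Kc Hp _ Ky) _.
  by rewrite addrAC subrr add0r enormN enormZ (ger0_norm aex0).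
have S2 : enorm (y t.+1 - y t) <= a * etay t * G + a * etay t * M.
  rewrite hy; apply: le_trans (proj_to_K Kc Hp _ Ky) _.
  rewrite addrAC subrr add0r enormN enormZ (ger0_norm aey0).
  rewrite -mulrDr ler_wpM2l //.
  by rewrite -{1}(subrK (m t) (g t)); exact: enormD.
have e3 : (y t - (a * etax t) *: m t) - (y t - (a * etay t) *: g t)
    = (a * etay t) *: (g t - m t) - (a * (etax t - etay t)) *: m t.
  by apply/rowP => i; rewrite !mxE; ring.
have S3 : enorm (x t.+1 - y t.+1) <= a * etay t * G + (a * etax t * M - a * etay t * M).
  rewrite hx hy; apply: le_trans (proj_nonexp Kc Hp _ _) _.
  rewrite e3; apply: le_trans (enormB _ _) _.
  rewrite !enormZ (ger0_norm aey0) (ger0_norm aexy).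
  rewrite -/G -/M le_eqVlt; apply/orP; left; apply/eqP; ring.
have cinv : 0 < c^-1 by rewrite invr_gt0.
have e2 : 2 * r / c = r / c + r / c by rewrite -mulrDl; congr (_ * _); ring.
split.
- exact: le_trans S1 A1.
- apply: le_trans S2 _; rewrite e2; lra.
- apply: le_trans S3 _; rewrite e2; have := mulr_ge0 aey0 M0; lra.
- have eR : r * (1 + 2 / c) = r + (r / c + r / c) by rewrite -e2; ring.
  rewrite eR.
  have rc0 : 0 <= r / c by rewrite divr_ge0 // ltW.
  have ey1 : y t.+1 - x0 = (y t.+1 - y t) + (y t - x0) by rewrite addrA subrK.
  have ex1 : x t.+1 - x0 = (x t.+1 - y t) + (y t - x0) by rewrite addrA subrK.
  have Y1 := enormD (y t.+1 - y t) (y t - x0).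
  have X1 := enormD (x t.+1 - y t) (y t - x0).
  rewrite -ey1 in Y1; rewrite -ex1 in X1.
  have hS2 : enorm (y t.+1 - y t) <= r / c + r / c by apply: le_trans S2 _; lra.
  have hS1 : enorm (x t.+1 - y t) <= r / c by exact: le_trans S1 A1.
  apply: bigmax_le; first lra.
  move=> [i hi] _ /=.
  have [hit|hit] := ltnP i t.+1.
    by apply: le_trans (term_le t i hit) _; rewrite -/r; lra.
  have -> : i = t.+1 by apply/eqP; rewrite eqn_leq hit -ltnS hi.
  rewrite !ge_max; apply/andP; split; last lra.
  apply/andP; split; lra.
Qed.
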